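(* Let $a$ be a complex number of modulus one and let $H$ be a $6\times 6$ complex Hadamard matrix all of whose entries lie in $\{1,a,a^2\}$. Then $H$ is complex equivalent to the Tao matrix $S_6^{(0)}$ or to the matrix $H^{(1)}$, where, with $\omega=e^{2\pi i/3}$, $$S_6^{(0)}=\begin{bmatrix} 1&1&1&1&1&1\\ 1&1&\omega&\omega&\omega^2&\omega^2\\ 1&\omega&1&\omega^2&\omega^2&\omega\\ 1&\omega&\omega^2&1&\omega&\omega^2\\ 1&\omega^2&\omega^2&\omega&1&\omega\\ 1&\omega^2&\omega&\omega^2&\omega&1 \end{bmatrix},\qquad H^{(1)}=\begin{bmatrix} i&1&1&1&1&1\\ 1&i&1&1&-1&-1\\ 1&1&i&-1&1&-1\\ 1&1&-1&i&-1&1\\ 1&-1&1&-1&i&1\\ 1&-1&-1&1&1&i \end{bmatrix}.$$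
   Context: A complex Hadamard matrix (CHM) of order $n$ is an $n\times n$ complex matrix $H$ all of whose entries have modulus one and which satisfies $HH^\dagger=nI$. A monomial unitary matrix is a unitary matrix each of whose rows and columns has exactly one nonzero entry, that entry having modulus one. Two $n\times n$ matrices $U,V$ are complex equivalent if $U=PVQ$ for some $n\times n$ monomial unitary matrices $P,Q$. *)

(* Defs.v *)
From HB Require Import structures.
From mathcomp Require Import all_boot all_order all_algebra.
From mathcomp Require Import all_reals.
From mathcomp Require Import complex.
Set Implicit Arguments. Unset Strict Implicit. Unset Printing Implicit Defensive.
Import Order.TTheory GRing.Theory Num.Theory.
Local Open Scope ring_scope.
Local Open Scope complex_scope.

Section Defs.
Variable R : realType.
Local Notation C := R[i].

Definition adjmx m n (A : 'M[C]_(m, n)) : 'M[C]_(n, m) := (map_mx Num.conj A)^T.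

Definition is_CHM n (H : 'M[C]_n) : Prop :=
  (forall i j, `|H i j| = 1) /\ H *m adjmx H = n%:R%:M.

Definition monomial_unitary n (P : 'M[C]_n) : Prop :=
  [/\ P *m adjmx P = 1%:M,
      forall i, #|[set j | P i j != 0]| = 1%N,
      forall j, #|[set i | P i j != 0]| = 1%N &
      forall i j, P i j != 0 -> `|P i j| = 1].

Definition complex_equiv n (U V : 'M[C]_n) : Prop :=
  exists P Q : 'M[C]_n, [/\ monomial_unitary P, monomial_unitary Q & U = P *m V *m Q].

(* omega = e^{2 pi i/3} = -1/2 + i sqrt(3)/2 *)
Definition omega : C := (- 2^-1) +i* (Num.sqrt 3 / 2).

Definition mx6_of_seq (s : seq (seq C)) : 'M[C]_6 :=
  \matrix_(i < 6, j < 6) nth 0 (nth [::] s i) j.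

Definition S6_exps : seq (seq nat) :=
  [:: [:: 0; 0; 0; 0; 0; 0];
      [:: 0; 0; 1; 1; 2; 2];
      [:: 0; 1; 0; 2; 2; 1];
      [:: 0; 1; 2; 0; 1; 2];
      [:: 0; 2; 2; 1; 0; 1];
      [:: 0; 2; 1; 2; 1; 0]]%N.

Definition S6_0 : 'M[C]_6 :=
  mx6_of_seq [seq [seq omega ^+ e | e <- r] | r <- S6_exps].

Definition H6_1 : 'M[C]_6 :=
  mx6_of_seq
  [:: [::  'i;  1;  1;  1;  1;  1];
      [::  1;  'i;  1;  1; -1; -1];
      [::  1;  1;  'i; -1;  1; -1];
      [::  1;  1; -1;  'i; -1;  1];
      [::  1; -1;  1; -1;  'i;  1];
      [::  1; -1; -1;  1;  1;  'i]].

End Defs.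

(* Main.v *)
Require Import Defs.
From HB Require Import structures.
From mathcomp Require Import all_boot all_order all_algebra.
From mathcomp Require Import all_reals.
From mathcomp Require Import complex.
From mathcomp Require Import ring lra zify.
Set Implicit Arguments. Unset Strict Implicit. Unset Printing Implicit Defensive.
Import Order.TTheory GRing.Theory Num.Theory.
Local Open Scope ring_scope.
Local Open Scope complex_scope.
Section Mon.
Variable R : realType.
Local Notation C := R[i].

Lemma adjmxE m n (A : 'M[C]_(m, n)) i j : adjmx A i j = Num.conj (A j i).
Proof. by rewrite /adjmx !mxE. Qed.

Definition monmx (s : 'I_6 -> 'I_6) (u : 'I_6 -> C) : 'M[C]_6 :=
  \matrix_(i, k) (if k == s i then u i else 0).

Lemma normC1_conj (z : C) : `|z| = 1 -> z * Num.conj z = 1.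
Proof. by move=> h; rewrite -normCK h expr1n. Qed.

Lemma monmx_unitary s u : injective s -> (forall i, `|u i| = 1) ->
  monomial_unitary (monmx s u).
Proof.
move=> sinj hu.
have u0 i : u i != 0 by apply/eqP => h; move: (hu i); rewrite h normr0 => /eqP; rewrite eq_sym oner_eq0.
split.
- apply/matrixP => i j; rewrite !mxE (bigD1 (s i)) //= big1 => [|k /negbTE nk].
    rewrite adjmxE !mxE eqxx addr0.
    case: (eqVneq i j) => [<-|nij]; first by rewrite eqxx normC1_conj.
    by rewrite (inj_eq sinj) (negbTE nij) conjC0 mulr0.
  by rewrite !mxE nk mul0r.
- move=> i; rewrite (_ : [set j | _] = [set s i]) ?cards1 //; apply/setP => k.
  by rewrite !inE !mxE; case: (k == s i); rewrite ?u0 ?eqxx.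
- move=> k; have [i _ ->] : exists2 i, true & k = s i.
    by exists (invF sinj k) => //; rewrite f_invF.
  rewrite (_ : [set i0 | _] = [set i]) ?cards1 //; apply/setP => i'.
  by rewrite !inE !mxE (inj_eq sinj) [i == i']eq_sym; case: (i' == i); rewrite ?u0 ?eqxx.
- move=> i k; rewrite mxE; by case: (k == s i) => //; rewrite eqxx.
Qed.

Lemma mu_tr n (A : 'M[C]_n.+1) : monomial_unitary A -> monomial_unitary A^T.
Proof.
case=> hu hr hc hn; split.
- have h1 : adjmx A *m A = 1%:M by apply: mulmx1C.
  have -> : adjmx A^T = (adjmx A)^T by apply/matrixP => i j; rewrite !mxE.
  by rewrite -trmx_mul h1 trmx1.
- by move=> i; rewrite -[RHS](hc i); apply: eq_card => j; rewrite !inE mxE.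
- by move=> j; rewrite -[RHS](hr j); apply: eq_card => i; rewrite !inE mxE.
- by move=> i j; rewrite !mxE; apply: hn.
Qed.
End Mon.
Section Transfer.
Variable R : realType.
Local Notation C := R[i].

Lemma expr_modeq (z : C) m a b : z ^+ m = 1 -> a = b %[mod m] -> z ^+ a = z ^+ b.
Proof. by move=> hz hab; rewrite -(expr_mod a hz) hab expr_mod. Qed.

Lemma transfer (z : C) (m : nat) (F T : 'I_6 -> 'I_6 -> nat) (sg tau : 'I_6 -> 'I_6)
  (u v : 'I_6 -> nat) :
  `|z| = 1 -> z ^+ m = 1 -> injective sg -> injective tau ->
  (forall i j, F i j = T (sg i) (tau j) + u i + v j %[mod m]) ->
  complex_equiv (\matrix_(i, j) z ^+ F i j) (\matrix_(i, j) z ^+ T i j).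
Proof.
move=> hz hm sinj tinj hF.
have hn n : `|z ^+ n| = 1 by rewrite normrX hz expr1n.
exists (monmx sg (fun i => z ^+ u i)), (monmx tau (fun j => z ^+ v j))^T.
split; [exact: monmx_unitary | apply: mu_tr; exact: monmx_unitary |].
apply/matrixP => i j; rewrite !mxE (bigD1 (tau j)) //= big1 => [|l /negbTE nl]; last first.
  by rewrite !mxE nl mulr0.
rewrite !mxE eqxx addr0 (bigD1 (sg i)) //= big1 => [|k /negbTE nk]; last first.
  by rewrite !mxE nk mul0r.
rewrite !mxE eqxx addr0 (expr_modeq hm (hF i j)) !exprD.
by rewrite [z ^+ T _ _ * _]mulrC.
Qed.
End Transfer.
Section A.
Variable R : realType.
Local Notation C := R[i].

Lemma natC (n : nat) : (n%:R : C) = (n%:R : R)%:C.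
Proof. by rewrite rmorph_nat. Qed.

Lemma ReMn (n : nat) (z : C) : complex.Re (n%:R * z) = n%:R * complex.Re z.
Proof. by case: z => p q; rewrite natC /= mul0r subr0. Qed.
Lemma ImMn (n : nat) (z : C) : complex.Im (n%:R * z) = n%:R * complex.Im z.
Proof. by case: z => p q; rewrite natC /= mul0r addr0. Qed.
Lemma ReD (z w : C) : complex.Re (z + w) = complex.Re z + complex.Re w.
Proof. by case: z; case: w. Qed.
Lemma ImD (z w : C) : complex.Im (z + w) = complex.Im z + complex.Im w.
Proof. by case: z; case: w. Qed.

Definition pick (a : C) (k : nat) : C := nth 0 [:: (Num.conj a)^+2; Num.conj a; 1; a; a^+2] k.

Lemma pickE a e f : a * Num.conj a = 1 -> (e < 3)%N -> (f < 3)%N ->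
  a ^+ e * Num.conj (a ^+ f) = pick a (e + 2 - f).
Proof.
move=> haa; rewrite rmorphXn /pick.
case: e => [|[|[|e]]] // _; case: f => [|[|[|f]]] // _ /=;
  rewrite ?expr0 ?expr1 ?mul1r ?mulr1 //.
- by rewrite expr2 mulrA haa mul1r.
- by rewrite expr2 -mulrA haa mulr1.
- by rewrite !expr2 mulrACA haa mulr1.
Qed.

Lemma sum_by_value (g : 'I_6 -> nat) (n : nat) (F : nat -> C) : (forall j, g j < n)%N ->
  \sum_(j < 6) F (g j) = \sum_(k < n) (\sum_(j < 6) (g j == k) : nat)%:R * F k.
Proof.
move=> hg.
have e j : F (g j) = \sum_(k < n) (g j == k)%:R * F k.
  rewrite (bigD1 (Ordinal (hg j))) //= eqxx mul1r big1 ?addr0 // => k hk.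
  rewrite (_ : (g j == k) = false) ?mul0r //; apply/negbTE; move: hk.
  by apply: contra => /eqP e; apply/eqP/val_inj; rewrite /= e.
rewrite (eq_bigr _ (fun j _ => e j)) exchange_big /=; apply: eq_bigr => k _.
by rewrite natr_sum mulr_suml.
Qed.
End A.
Section B.
Variable R : realType.
Local Notation C := R[i].

Definition cnt (E : 'I_6 -> 'I_6 -> nat) r s k : nat := \sum_(j < 6) ((E r j + 2 - E s j)%N == k).

Lemma conj_unit (x y : R) : x ^+ 2 + y ^+ 2 = 1 -> (x +i* y) * Num.conj (x +i* y) = 1.
Proof.
move=> hxy; rewrite [RHS](_ : 1 = 1 +i* 0) //= ; congr (_ +i* _); last by ring.
by rewrite -hxy; ring.
Qed.

Lemma pair_eqs (x y : R) (E : 'I_6 -> 'I_6 -> nat) r s : (forall i j, E i j < 3)%N ->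
  x ^+ 2 + y ^+ 2 = 1 ->
  \sum_(j < 6) (x +i* y) ^+ E r j * Num.conj ((x +i* y) ^+ E s j) = 0 ->
  (cnt E r s 2)%:R + ((cnt E r s 1)%:R + (cnt E r s 3)%:R) * x
     + ((cnt E r s 0)%:R + (cnt E r s 4)%:R) * (x ^+ 2 - y ^+ 2) = 0 :> R /\
  ((cnt E r s 3)%:R - (cnt E r s 1)%:R) * y
     + ((cnt E r s 4)%:R - (cnt E r s 0)%:R) * (2 * x * y) = 0 :> R.
Proof.
move=> hE hxy.
rewrite (eq_bigr (fun j => pick (x +i* y) (E r j + 2 - E s j))); last first.
  by move=> j _; apply: pickE; [exact: conj_unit|exact: hE|exact: hE].
rewrite (sum_by_value (n := 5)); last by move=> j; have := hE s j; have := hE r j; lia.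
rewrite (eq_bigr (fun k : 'I_5 => (cnt E r s k)%:R * pick (x +i* y) k)) //.
rewrite !big_ord_recl big_ord0 addr0 /= => h.
split.
- have := congr1 (@complex.Re R) h; rewrite !ReD !ReMn /= => {}h.
  rewrite -[RHS]h /cnt; ring.
- have := congr1 (@complex.Im R) h; rewrite !ImD !ImMn /= => {}h.
  rewrite -[RHS]h /cnt; ring.
Qed.
End B.
Fixpoint allLists (n m : nat) : seq (seq nat) :=
  match n with
  | 0 => [:: [::]]
  | n'.+1 => [seq x :: l | x <- iota 0 m, l <- allLists n' m]
  end.

Lemma mem_allLists n m l : size l = n -> all (fun x => x < m)%N l -> l \in allLists n m.
Proof.
elim: n l => [|n IH] [|x l] //= [sz] /andP[xm hl].
by apply: allpairs_f; [rewrite mem_iota | exact: IH].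
Qed.

Definition tabOK (l : seq nat) : bool :=
  let c0 := nth 0 l 0 in let c1 := nth 0 l 1 in let c2 := nth 0 l 2 in
  let c3 := nth 0 l 3 in let c4 := nth 0 l 4 in
  let P1 := (c1 + c3)%N in let P2 := (c0 + c4)%N in
  let Ep := (2*(c4*c4+c0*c0)*c2+4*c0*c4*P2+P1*(c3*c0+c1*c4)+P2*(c3*c3+c1*c1))%N in
  let En := (4*c0*c4*c2+2*(c4*c4+c0*c0)*P2+P1*(c3*c4+c1*c0)+2*c1*c3*P2)%N in
  [&& (c0 + c1 + c2 + c3 + c4 == 6)%N, (0 < c2)%N & c4 != c0] ==>
  [|| Ep != En, l == [:: 0; 0; 1; 4; 1]%N, l == [:: 1; 4; 1; 0; 0]%N,
      c3 == c1, (c3 + c0 == c1 + c4)%N, (2*c3 + c4 == 2*c1 + c0)%N | (c3 + c4 == c1 + c0)%N].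

Lemma tab_all : all tabOK (allLists 5 7).
Proof. by vm_compute. Qed.

Section X.
Variable R : realType.

Lemma natr_eqE (m n : nat) : (m%:R = n%:R :> R) -> m = n.
Proof. by move/eqP; rewrite eqr_nat => /eqP. Qed.

Lemma xcases (x : R) (c0 c1 c2 c3 c4 : nat) :
  (c0 + c1 + c2 + c3 + c4 = 6)%N -> (0 < c2)%N -> -1 < x -> x < 1 ->
  c2%:R + (c1%:R + c3%:R) * x + (c0%:R + c4%:R) * (2 * x ^+ 2 - 1) = 0 :> R ->
  (c3%:R - c1%:R) + (c4%:R - c0%:R) * (2 * x) = 0 :> R ->
  x = 0 \/ x = -1/2 \/ x = 1/4 \/ x = 1/2.
Proof.
move=> hs h2 hx1 hx2 e1 e2.
case: (eqVneq c4 c0) => [e40 | n40].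
  subst c4; have e31 : c3 = c1 by apply: natr_eqE; lra.
  subst c3.
  have hb : (c0 <= 2 /\ c1 <= 2)%N by lia.
  case: hb => hb0 hb1.
  move: c0 hs hb0 e1 e2; case=> [|[|[|c0]]] hs hb0 e1 e2; try (exfalso; lia);
  move: c1 hs hb1 e1 e2; case=> [|[|[|c1]]] hs hb1 e1 e2; try (exfalso; lia);
  move: c2 hs h2 e1 e2; case=> [|[|[|[|[|[|[|c2]]]]]]] hs h2 e1 e2; try (exfalso; lia).
  - exfalso; lra.
  - exfalso; lra.
  - right; left; lra.
  - exfalso; nra.
  - have : x * (2 * x + 1) = 0 by lra.
    by move/eqP; rewrite mulf_eq0 => /orP[/eqP->|/eqP h]; [left|right; left; lra].
  - have : (2 * x - 1) * (2 * x + 1) = 0 by lra.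
    by move/eqP; rewrite mulf_eq0 => /orP[/eqP h|/eqP h]; [right; right; right|right; left]; lra.
set M1 := (c3%:R - c1%:R : R); set M2 := (c4%:R - c0%:R : R).
have M2n : M2 != 0.
  by rewrite /M2 subr_eq0 eqr_nat.
set P1 := (c1 + c3)%N; set P2 := (c0 + c4)%N.
set Ep := (2*(c4*c4+c0*c0)*c2+4*c0*c4*P2+P1*(c3*c0+c1*c4)+P2*(c3*c3+c1*c1))%N.
set En := (4*c0*c4*c2+2*(c4*c4+c0*c0)*P2+P1*(c3*c4+c1*c0)+2*c1*c3*P2)%N.
have hE : Ep = En.
  apply: natr_eqE; apply/eqP; rewrite -subr_eq0; apply/eqP.
  have -> : (Ep%:R : R) - En%:R = 2 * M2 ^+ 2 * (c2%:R + (c1%:R + c3%:R) * x + (c0%:R + c4%:R) * (2 * x ^+ 2 - 1))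
     + ((c3%:R - c1%:R) + (c4%:R - c0%:R) * (2 * x)) * ((c0%:R + c4%:R) * (M1 - 2 * M2 * x) - (c1%:R + c3%:R) * M2).
    by rewrite /Ep /En /P1 /P2 /M1 /M2 !natrD !natrM; ring.
  by rewrite e1 e2 !mul0r mulr0 addr0.
have hm : [:: c0; c1; c2; c3; c4] \in allLists 5 7.
  by apply: mem_allLists => //=; rewrite ?andbT; repeat (apply/andP; split); lia.
have := allP tab_all _ hm. rewrite /tabOK /= hs eqxx h2 n40 /=.
rewrite -/P1 -/P2 -/Ep -/En hE eqxx /=.
have lhs2 : M1 + M2 * (2 * x) = 0 by [].
have key (w : R) : M2 * w = 0 -> w = 0.
  by move/eqP; rewrite mulf_eq0 (negbTE M2n) /= => /eqP.
have hc (a b : nat) : (a = b)%N -> (a%:R = b%:R :> R) by move->.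
move=> /orP[/eqP [e0 e1' e2' e3' e4'] | /orP[/eqP [e0 e1' e2' e3' e4'] | /orP[/eqP e | /orP[/eqP e | /orP[/eqP e | /eqP e]]]]].
- exfalso; subst; clear -e2 hx1 hx2; lra.
- exfalso; subst; clear -e2 hx1 hx2; lra.
- left; have h := hc _ _ e.
  have : M2 * (2 * x) = 0 by rewrite -lhs2 /M1 h; ring.
  by move/key; lra.
- right; left; have h := hc _ _ e; rewrite !natrD in h.
  have : M2 * (2 * x + 1) = 0 by rewrite -[RHS]lhs2 /M1 /M2; lra.
  by move/key; lra.
- right; right; left; have h := hc _ _ e; rewrite !natrD in h.
  have : M2 * (4 * x - 1) = 0 by rewrite -[RHS](mulr0 2) -[in RHS]lhs2 /M1 /M2; lra.
  by move/key; lra.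
- right; right; right; have h := hc _ _ e; rewrite !natrD in h.
  have : M2 * (2 * x - 1) = 0 by rewrite -[RHS]lhs2 /M1 /M2; lra.
  by move/key; lra.
Qed.
End X.
Section DC.
Local Open Scope nat_scope.

Lemma sumC1 (r : 'I_6) k : \sum_(s < 6 | s != r) k = (5 * k)%N.
Proof.
by rewrite (eq_bigl (mem (predC1 r))) // sum_nat_const cardC1 card_ord.
Qed.

Lemma nsum_by_value (g : 'I_6 -> nat) (F : nat -> nat) : (forall r, g r < 3)%N ->
  \sum_(r < 6) F (g r) = \sum_(v < 3) (\sum_(r < 6) (g r == v)) * F v.
Proof.
move=> hg.
have e j : F (g j) = \sum_(k < 3) (g j == k) * F k.
  rewrite (bigD1 (Ordinal (hg j))) //= eqxx mul1n big1 ?addn0 // => k hk.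
  rewrite (_ : (g j == k) = false) ?mul0n //; apply/negbTE; move: hk.
  by apply: contra => /eqP e; apply/eqP/val_inj; rewrite /= e.
rewrite (eq_bigr _ (fun j _ => e j)) exchange_big /=; apply: eq_bigr => k _.
by rewrite big_distrl.
Qed.

Lemma sq12 (a b c : nat) : a + b + c = 6 -> 12 <= a * a + b * b + c * c.
Proof.
move=> h; have : (a <= 6 /\ b <= 6)%N by lia.
case=> ha hb; move: a b ha hb h => [|[|[|[|[|[|[|a]]]]]]] [|[|[|[|[|[|[|b]]]]]]] ha hb h; lia.
Qed.
Lemma sq18 (a b c : nat) : a + b + c = 6 -> 4 * (a * c) <= a * a + b * b + c * c + 18.
Proof.
move=> h; have : (a <= 6 /\ b <= 6)%N by lia.
case=> ha hb; move: a b ha hb h => [|[|[|[|[|[|[|a]]]]]]] [|[|[|[|[|[|[|b]]]]]]] ha hb h; lia.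
Qed.
Lemma b00 : bump 0 0 = 1. Proof. by []. Qed.
Lemma b01 : bump 0 1 = 2. Proof. by []. Qed.
Lemma d2E a b : (a + 2 - b == 2) = (a == b).
Proof. by apply/eqP/eqP; lia. Qed.
Lemma d04E a b : (a < 3 -> b < 3 -> (a + 2 - b == 0) + (a + 2 - b == 4) =
   ((a == 0) && (b == 2)) + ((a == 2) && (b == 0))).
Proof. by case: a => [|[|[|a]]] //; case: b => [|[|[|b]]]. Qed.

Definition colc (E : 'I_6 -> 'I_6 -> nat) j v := \sum_(r < 6) (E r j == v).

Lemma pairs_col (E : 'I_6 -> 'I_6 -> nat) (phi : nat -> nat -> nat) : (forall i j, E i j < 3)%N ->
  \sum_(r < 6) \sum_(s < 6) \sum_(j < 6) phi (E r j) (E s j) =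
  \sum_(j < 6) \sum_(w < 3) colc E j w * \sum_(v < 3) colc E j v * phi v w.
Proof.
move=> hE.
rewrite (eq_bigr (fun r => \sum_(j < 6) \sum_(s < 6) phi (E r j) (E s j))); last first.
  by move=> r _; rewrite exchange_big.
rewrite exchange_big; apply: eq_bigr => j _.
rewrite (eq_bigr (fun r => \sum_(w < 3) colc E j w * phi (E r j) w)); last first.
  by move=> r _; rewrite (nsum_by_value (fun v => phi (E r j) v)) //; apply: eq_bigr => w _.
rewrite exchange_big; apply: eq_bigr => w _.
rewrite -big_distrr /=; congr (_ * _).
by rewrite (nsum_by_value (fun v => phi v w)).
Qed.

Lemma colc_sum E j : (forall i, E i j < 3)%N -> (colc E j 0 + colc E j 1 + colc E j 2 = 6)%N.
Proof.
move=> hE; have h := nsum_by_value (fun=> 1%N) hE.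
rewrite (eq_bigr (fun v : 'I_3 => colc E j v)) in h; last by move=> v _; rewrite muln1.
rewrite sum_nat_const card_ord big_ord_recl big_ord_recl big_ord_recl big_ord0 in h.
move: h; rewrite /= (_ : bump 0 0 = 1) // (_ : bump 0 1 = 2) //; lia.
Qed.

Lemma cnt_diag E r : (forall i j, E i j < 3)%N ->
  cnt E r r 2 = 6%N /\ cnt E r r 0 = 0%N /\ cnt E r r 4 = 0%N.
Proof.
move=> hE; rewrite /cnt; split; last split.
- by rewrite (eq_bigr (fun=> 1%N)) ?sum_nat_const ?card_ord // => j _; rewrite addKn.
- by rewrite big1 // => j _; rewrite addKn.
- by rewrite big1 // => j _; rewrite addKn.
Qed.

Lemma quarter_false E : (forall i j, E i j < 3)%N ->
  (forall r s, r != s -> cnt E r s 2 = 1%N) -> False.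
Proof.
move=> hE hq.
have h1 : \sum_(r < 6) \sum_(s < 6) cnt E r s 2 = 66%N.
  rewrite (eq_bigr (fun=> 11%N)) ?sum_nat_const ?card_ord // => r _.
  rewrite (bigD1 r) //= (eq_bigr (fun=> 1%N)) => [|s hs]; last by apply: hq; rewrite eq_sym.
  by rewrite sumC1 (cnt_diag r hE).1.
have h2 := pairs_col (fun v w => (v == w)%N) hE.
have h1' : \sum_(r < 6) \sum_(s < 6) \sum_(j < 6) (E r j == E s j) = 66.
  rewrite -h1; apply: eq_bigr => r _; apply: eq_bigr => s _; apply: eq_bigr => j _.
  by rewrite d2E.
rewrite h1' in h2.
have : (72 <= \sum_(j < 6) \sum_(w < 3) colc E j w * \sum_(v < 3) colc E j v * (v == w)%N)%N.
  rewrite (_ : 72 = \sum_(j < 6) 12)%N; last by rewrite sum_nat_const card_ord.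
  apply: leq_sum => j _; have := colc_sum (fun i => hE i j).
  rewrite !big_ord_recl !big_ord0 /= !b00 !b01 /= => hs; have := sq12 hs; lia.
move=> hle; have := leq_trans hle (eq_leq (esym h2)); by [].
Qed.

Lemma half_false E : (forall i j, E i j < 3)%N ->
  (forall r s, r != s -> 2 * (cnt E r s 0 + cnt E r s 4) = cnt E r s 2 + 6)%N -> False.
Proof.
move=> hE hq.
have h1 : \sum_(r < 6) \sum_(s < 6) (2 * (cnt E r s 0 + cnt E r s 4))%N =
          (\sum_(r < 6) \sum_(s < 6) cnt E r s 2 + 144)%N.
  rewrite (_ : 144 = \sum_(r < 6) 24)%N; last by rewrite sum_nat_const card_ord.
  rewrite -big_split /=; apply: eq_bigr => r _.
  rewrite (bigD1 r) //= [in RHS](bigD1 r) //= (eq_bigr (fun s => cnt E r s 2 + 6)%N); last first.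
    by move=> s hs; apply: hq; rewrite eq_sym.
  rewrite big_split /= sumC1; have [d2 [d0 d4]] := cnt_diag r hE; rewrite d2 d0 d4; lia.
pose phi1 (v w : nat) := (2 * (((v == 0) && (w == 2)) + ((v == 2) && (w == 0))))%N.
pose phi2 (v w : nat) := (v == w).
have eL : \sum_(r < 6) \sum_(s < 6) (2 * (cnt E r s 0 + cnt E r s 4))%N =
   \sum_(r < 6) \sum_(s < 6) \sum_(j < 6) phi1 (E r j) (E s j).
  apply: eq_bigr => r _; apply: eq_bigr => s _.
  rewrite /cnt -big_split /= big_distrr; apply: eq_bigr => j _.
  by rewrite /phi1 d04E.
have eR : \sum_(r < 6) \sum_(s < 6) cnt E r s 2 =
   \sum_(r < 6) \sum_(s < 6) \sum_(j < 6) phi2 (E r j) (E s j).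
  apply: eq_bigr => r _; apply: eq_bigr => s _.
  by apply: eq_bigr => j _; rewrite /phi2 d2E.
rewrite eL eR (pairs_col phi1 hE) (pairs_col phi2 hE) in h1.
have : (\sum_(j < 6) \sum_(w < 3) colc E j w * \sum_(v < 3) colc E j v * phi1 v w <=
   \sum_(j < 6) (\sum_(w < 3) colc E j w * \sum_(v < 3) colc E j v * phi2 v w + 18))%N.
  apply: leq_sum => j _; have := colc_sum (fun i => hE i j).
  rewrite !big_ord_recl !big_ord0 /= !b00 !b01 /phi1 /phi2 /= => hs; have := sq18 hs; lia.
move=> hle; have := leq_trans (eq_leq (esym h1)) hle.
by rewrite big_split /= sum_nat_const card_ord leq_add2l.
Qed.

Lemma parity_false E : (forall i j, E i j < 3)%N ->
  (forall r s, r != s -> cnt E r s 1 + cnt E r s 3 = 3)%N -> False.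
Proof.
move=> hE hp.
pose o0 : 'I_6 := ord0; pose o1 : 'I_6 := Ordinal (isT : (1 < 6)%N); pose o2 : 'I_6 := Ordinal (isT : (2 < 6)%N).
have h01 := hp o0 o1 isT; have h02 := hp o0 o2 isT; have h12 := hp o1 o2 isT.
pose psi (a b c : nat) := ((a + 2 - b == 1) + (a + 2 - b == 3) + (a + 2 - c == 1) + (a + 2 - c == 3)
   + (b + 2 - c == 1) + (b + 2 - c == 3))%N.
have hs : (\sum_(j < 6) psi (E o0 j) (E o1 j) (E o2 j) = 9)%N.
  rewrite /psi !big_split /=; move: h01 h02 h12; rewrite /cnt.
  move: (\sum_(j < 6) (E o0 j + 2 - E o1 j == 1)%N) => a1.
  move: (\sum_(j < 6) (E o0 j + 2 - E o1 j == 3)%N) => a2.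
  move: (\sum_(j < 6) (E o0 j + 2 - E o2 j == 1)%N) => a3.
  move: (\sum_(j < 6) (E o0 j + 2 - E o2 j == 3)%N) => a4.
  move: (\sum_(j < 6) (E o1 j + 2 - E o2 j == 1)%N) => a5.
  move: (\sum_(j < 6) (E o1 j + 2 - E o2 j == 3)%N) => a6.
  lia.
have hev j : ~~ odd (psi (E o0 j) (E o1 j) (E o2 j)).
  move: (hE o0 j) (hE o1 j) (hE o2 j); rewrite /psi.
  by case: (E o0 j) => [|[|[|?]]] //; case: (E o1 j) => [|[|[|?]]] //; case: (E o2 j) => [|[|[|?]]].
have : ~~ odd (\sum_(j < 6) psi (E o0 j) (E o1 j) (E o2 j)).
  apply: (big_ind (fun n => ~~ odd n)) => //.
  - by move=> m n hm hn; rewrite oddD (negbTE hm) (negbTE hn).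
  - try (by move=> j _; exact: hev).
by rewrite hs.
Qed.

Lemma exists_pair E : (forall i j, E i j < 3)%N -> exists r s, r != s /\ (0 < cnt E r s 2)%N.
Proof.
move=> hE.
pose o k (h : (k < 6)%N) : 'I_6 := Ordinal h.
have h0 := hE (o 0 isT) ord0; have h1 := hE (o 1 isT) ord0;
have h2 := hE (o 2 isT) ord0; have h3 := hE (o 3 isT) ord0.
have pos r s : E r ord0 = E s ord0 -> (0 < cnt E r s 2)%N.
  by move=> e; rewrite /cnt (bigD1 ord0) //= e addKn eqxx.
have : E (o 0 isT) ord0 = E (o 1 isT) ord0 \/ E (o 0 isT) ord0 = E (o 2 isT) ord0 \/
       E (o 0 isT) ord0 = E (o 3 isT) ord0 \/ E (o 1 isT) ord0 = E (o 2 isT) ord0 \/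
       E (o 1 isT) ord0 = E (o 3 isT) ord0 \/ E (o 2 isT) ord0 = E (o 3 isT) ord0 by lia.
case=> [e|[e|[e|[e|[e|e]]]]].
- by exists (o 0 isT), (o 1 isT); split => //; exact: pos e.
- by exists (o 0 isT), (o 2 isT); split => //; exact: pos e.
- by exists (o 0 isT), (o 3 isT); split => //; exact: pos e.
- by exists (o 1 isT), (o 2 isT); split => //; exact: pos e.
- by exists (o 1 isT), (o 3 isT); split => //; exact: pos e.
- by exists (o 2 isT), (o 3 isT); split => //; exact: pos e.
Qed.
Lemma cnt_sum E r s : (forall i j, E i j < 3)%N ->
  cnt E r s 0 + cnt E r s 1 + cnt E r s 2 + cnt E r s 3 + cnt E r s 4 = 6.
Proof.
move=> hE; rewrite /cnt -!big_split /= (eq_bigr (fun=> 1)) ?sum_nat_const ?card_ord // => j _.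
have := hE r j; have := hE s j.
by case: (E r j) => [|[|[|?]]] //; case: (E s j) => [|[|[|?]]].
Qed.
End DC.
Section AC.
Variable R : realType.
Local Notation C := R[i].

Lemma sqrt3E : Num.sqrt (3 : R) ^+ 2 = 3.
Proof. by rewrite sqr_sqrtr // ler0n. Qed.
Lemma sqrt3_gt0 : 0 < Num.sqrt (3 : R).
Proof. by rewrite sqrtr_gt0 ltr0n. Qed.

Lemma omega2 : omega R ^+ 2 = (- 2^-1) +i* (- (Num.sqrt 3 / 2)).
Proof.
rewrite /omega expr2 /=; congr (_ +i* _).
- have h := sqrt3E; rewrite expr2 in h; rewrite (_ : _ * _ - _ = 4^-1 - (Num.sqrt 3 * Num.sqrt 3) / 4); last by field.
  by rewrite h; field.
- by field.
Qed.

Lemma i3 : ('i : C) ^+ 3 = 0 +i* (-1).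
Proof. by rewrite !exprS expr0 /=; congr (_ +i* _); ring. Qed.

Lemma a_cases (a : C) (E : 'I_6 -> 'I_6 -> nat) : `|a| = 1 -> (forall i j, E i j < 3)%N ->
  (forall r s, r != s -> \sum_(j < 6) a ^+ E r j * Num.conj (a ^+ E s j) = 0) ->
  [\/ a = 'i, a = 'i ^+ 3, a = omega R | a = omega R ^+ 2].
Proof.
case: a => x y ha hE horth.
have hxy : x ^+ 2 + y ^+ 2 = 1.
  have := normCK (x +i* y); rewrite ha expr1n => /(congr1 (@complex.Re R)) /= h.
  by rewrite [RHS]h; ring.
have peq r s (h : r != s) := pair_eqs hE hxy (horth r s h).
have csum r s : (cnt E r s 0)%:R + (cnt E r s 1)%:R + (cnt E r s 2)%:R + (cnt E r s 3)%:R
    + (cnt E r s 4)%:R = 6 :> R.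
  by rewrite -!natrD (cnt_sum r s hE).
pose o0 : 'I_6 := ord0; pose o1 : 'I_6 := Ordinal (isT : (1 < 6)%N).
case: (eqVneq y 0) => [y0|yn0].
  subst y.
  have : (x - 1) * (x + 1) = 0.
    by rewrite (_ : (x - 1) * (x + 1) = (x ^+ 2 + 0 ^+ 2) - 1); [rewrite hxy subrr | ring].
  move/eqP; rewrite mulf_eq0 => /orP[/eqP hx|/eqP hx].
    exfalso; have [e1 _] := peq o0 o1 isT; have := csum o0 o1.
    have hx1 : x = 1 by lra.
    subst x; move: e1; rewrite expr1n expr0n /=; lra.
  exfalso; apply: (parity_false hE) => r s h.
  have [e1 _] := peq r s h; have := csum r s.
  have hx1 : x = -1 by lra.
  subst x; move: e1; rewrite expr0n /= sqrrN expr1n => e1 e2.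
  apply: natr_eqE; rewrite natrD; lra.
have hy2 : 0 < y ^+ 2 by rewrite lt_def sqrf_eq0 yn0 sqr_ge0.
have hx1 : -1 < x by nra.
have hx2 : x < 1 by nra.
have e1' r s (h : r != s) : (cnt E r s 2)%:R + ((cnt E r s 1)%:R + (cnt E r s 3)%:R) * x
     + ((cnt E r s 0)%:R + (cnt E r s 4)%:R) * (2 * x ^+ 2 - 1) = 0 :> R.
  have [e1 _] := peq r s h; rewrite -[RHS]e1.
  rewrite (_ : 2 * x ^+ 2 - 1 = x ^+ 2 - y ^+ 2) //; lra.
have e2' r s (h : r != s) : ((cnt E r s 3)%:R - (cnt E r s 1)%:R)
     + ((cnt E r s 4)%:R - (cnt E r s 0)%:R) * (2 * x) = 0 :> R.
  have [_ e2] := peq r s h.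
  have : y * (((cnt E r s 3)%:R - (cnt E r s 1)%:R)
     + ((cnt E r s 4)%:R - (cnt E r s 0)%:R) * (2 * x)) = 0 by rewrite -[RHS]e2; ring.
  by move/eqP; rewrite mulf_eq0 (negbTE yn0) /= => /eqP.
have [r0 [s0 [hrs hc2]]] := exists_pair hE.
have := xcases (cnt_sum r0 s0 hE) hc2 hx1 hx2 (e1' r0 s0 hrs) (e2' r0 s0 hrs).
case=> [x0|[xm|[xq|xh]]].
- subst x.
  have : (y - 1) * (y + 1) = 0.
    by rewrite (_ : (y - 1) * (y + 1) = (0 ^+ 2 + y ^+ 2) - 1); [rewrite hxy subrr | ring].
  move/eqP; rewrite mulf_eq0 => /orP[/eqP hy|/eqP hy].
    by apply: Or41; congr (_ +i* _); lra.
  by apply: Or42; rewrite i3; congr (_ +i* _); lra.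
- have hs := sqrt3E; have hs0 := sqrt3_gt0.
  have : (y - Num.sqrt 3 / 2) * (y + Num.sqrt 3 / 2) = 0.
    rewrite (_ : (y - Num.sqrt 3 / 2) * (y + Num.sqrt 3 / 2) = y ^+ 2 - (Num.sqrt 3) ^+ 2 / 4); last by field.
    rewrite hs; subst x; lra.
  move/eqP; rewrite mulf_eq0 => /orP[/eqP hy|/eqP hy].
    by apply: Or43; rewrite /omega; congr (_ +i* _); lra.
  by apply: Or44; rewrite omega2; congr (_ +i* _); lra.
- exfalso; apply: (quarter_false hE) => r s h.
  have e1 := e1' r s h; have e0 := csum r s; have hcs := cnt_sum r s hE.
  subst x.
  have : ((2 * cnt E r s 2 + 4)%N)%:R = ((3 * (cnt E r s 0 + cnt E r s 4))%N)%:R :> R.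
    rewrite !natrD ?natrM; lra.
  move/natr_eqE; lia.
- exfalso; apply: (half_false hE) => r s h.
  have e1 := e1' r s h; have e0 := csum r s.
  subst x.
  apply: natr_eqE; rewrite !natrD ?natrM; lra.
Qed.
End AC.
Section Comp.
Local Open Scope nat_scope.

Definition zeros : seq nat := nseq 6 0.
Definition dlist (m : nat) (r s : seq nat) : seq nat :=
  [seq (xy.1 + (m - xy.2)) %% m | xy <- zip r s].
Definition condm (m : nat) (d : seq nat) : bool :=
  if m == 3 then [&& count_mem 0 d == 2, count_mem 1 d == 2 & count_mem 2 d == 2]
  else (count_mem 0 d == count_mem 2 d) && (count_mem 1 d == count_mem 3 d).
Definition compat (m : nat) (r s : seq nat) : bool := condm m (dlist m r s).
Definition Rlist (m : nat) := [seq r <- allLists 6 m | (head 1 r == 0) && compat m zeros r].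

Definition nth2 (L : seq (seq nat)) (i j : nat) : nat := nth 0 (nth [::] L i) j.

Fixpoint findo {A B : Type} (f : A -> option B) (l : seq A) : option B :=
  match l with [::] => None | x :: l' => if f x is Some b then Some b else findo f l' end.

Fixpoint permsN (n : nat) (l : seq nat) : seq (seq nat) :=
  match n with 0 => [:: [::]]
  | n'.+1 => flatten [seq [seq x :: p | p <- permsN n' (rem x l)] | x <- l] end.

Definition dephT (m : nat) (T : seq (seq nat)) (p q i c : nat) : nat :=
  (nth2 T i c + (m - nth2 T i q) + (m - nth2 T p c) + nth2 T p q) %% m.

Definition tabq (m : nat) (T : seq (seq nat)) (q : nat) : seq (seq nat) :=
  [seq [seq dephT m T 0 q i c | c <- iota 0 6] | i <- iota 0 6].

Definition colsL (L : seq (seq nat)) : seq (seq nat) :=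
  [seq [seq nth2 L i j | i <- iota 0 6] | j <- iota 0 6].

Fixpoint findcols (Pc : seq (seq nat)) (vs : seq (seq nat)) : option (seq nat) :=
  match vs with [::] => Some [::]
  | v :: vs' => let c := index v Pc in
      if c < 6 then (if findcols Pc vs' is Some cs then Some (c :: cs) else None) else None end.

Definition canon (P5 : seq (seq nat)) (tabs : seq (nat * seq (seq nat))) (L : seq (seq nat)) : option (seq nat * seq nat) :=
  let Lc := behead (colsL L) in
  findo (fun qt => let: (q, Tq) := qt in
     findo (fun pr => let sg := 0 :: pr in
        let Pc := [seq [seq nth2 Tq i c | i <- sg] | c <- iota 0 6] in
        match findcols Pc Lc with None => None
        | Some cs => Some (sg, q :: cs) end) P5) tabs.

Definition pvalid (s : seq nat) := [&& size s == 6, uniq s & all (fun x => x < 6) s].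

Definition Uf m T (sg tau : seq nat) (i : nat) := m - nth2 T (nth 0 sg i) (nth 0 tau 0).
Definition Vf m T (sg tau : seq nat) (j : nat) := (m - nth2 T (nth 0 sg 0) (nth 0 tau j)) + nth2 T (nth 0 sg 0) (nth 0 tau 0).

Definition relb (m : nat) (T L : seq (seq nat)) (sg tau : seq nat) : bool :=
  [&& pvalid sg, pvalid tau &
   all (fun i => all (fun j =>
     nth2 L i j == (nth2 T (nth 0 sg i) (nth 0 tau j) + Uf m T sg tau i + Vf m T sg tau j) %% m)
     (iota 0 6)) (iota 0 6)].

Definition leaf_ok P5 tabs (m : nat) (T L : seq (seq nat)) : bool :=
  if canon P5 tabs L is Some (sg, tau) then relb m T L sg tau else false.

Definition check (m : nat) (T : seq (seq nat)) : bool :=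
  let P5 := permsN 5 (iota 1 5) in
  let tabs := [:: (1, tabq m T 1); (0, tabq m T 0)] in
  all (fun r1 => let R1 := [seq r <- Rlist m | compat m r1 r] in
   all (fun r2 => let R2 := [seq r <- R1 | compat m r2 r] in
   all (fun r3 => let R3 := [seq r <- R2 | compat m r3 r] in
   all (fun r4 => let R4 := [seq r <- R3 | compat m r4 r] in
   all (fun r5 => leaf_ok P5 tabs m T [:: zeros; r1; r2; r3; r4; r5]) R4) R3) R2) R1) (Rlist m).

Lemma check_sound m T : check m T -> forall r1 r2 r3 r4 r5,
  r1 \in Rlist m -> r2 \in Rlist m -> r3 \in Rlist m -> r4 \in Rlist m -> r5 \in Rlist m ->
  compat m r1 r2 -> compat m r1 r3 -> compat m r1 r4 -> compat m r1 r5 ->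
  compat m r2 r3 -> compat m r2 r4 -> compat m r2 r5 ->
  compat m r3 r4 -> compat m r3 r5 -> compat m r4 r5 ->
  exists sg tau, relb m T [:: zeros; r1; r2; r3; r4; r5] sg tau.
Proof.
rewrite /check => /allP h1 r1 r2 r3 r4 r5 i1 i2 i3 i4 i5 c12 c13 c14 c15 c23 c24 c25 c34 c35 c45.
have /allP h2 := h1 r1 i1.
have /allP h3 := h2 r2 ltac:(by rewrite mem_filter c12 i2).
have /allP h4 := h3 r3 ltac:(by rewrite mem_filter c23 mem_filter c13 i3).
have /allP h5 := h4 r4 ltac:(by rewrite mem_filter c34 mem_filter c24 mem_filter c14 i4).
have := h5 r5 ltac:(by rewrite mem_filter c45 mem_filter c35 mem_filter c25 mem_filter c15 i5).
rewrite /leaf_ok; case: canon => [[sg tau]|] // h.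
by exists sg, tau.
Qed.

Lemma relbP m T L sg tau : relb m T L sg tau ->
  [/\ pvalid sg, pvalid tau & forall i j, i < 6 -> j < 6 ->
    nth2 L i j = (nth2 T (nth 0 sg i) (nth 0 tau j) + Uf m T sg tau i + Vf m T sg tau j) %% m].
Proof.
case/and3P => hs ht /allP h; split => // i j hi hj.
have /allP := h i ltac:(by rewrite mem_iota).
by move=> /(_ j ltac:(by rewrite mem_iota)) /eqP.
Qed.

End Comp.

Definition E1e : seq (seq nat) :=
  [:: [:: 1; 0; 0; 0; 0; 0];
      [:: 0; 1; 0; 0; 2; 2];
      [:: 0; 0; 1; 2; 0; 2];
      [:: 0; 0; 2; 1; 2; 0];
      [:: 0; 2; 0; 2; 1; 0];
      [:: 0; 2; 2; 0; 0; 1]]%N.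

Lemma chk3 : check 3 S6_exps.
Proof. by vm_compute. Qed.
Lemma chk4 : check 4 E1e.
Proof. by vm_compute. Qed.
Section Fin.
Variable R : realType.
Local Notation C := R[i].

Lemma sum_count_mem (z : C) m (d : seq nat) : all (fun x => x < m)%N d ->
  \sum_(x <- d) z ^+ x = \sum_(k < m) (count_mem (nat_of_ord k) d)%:R * z ^+ k.
Proof.
elim: d => [|x d IH] /=; first by rewrite big_nil big1 // => k _; rewrite mul0r.
case/andP => hx hd; rewrite big_cons IH //.
rewrite [RHS](eq_bigr (fun k : 'I_m => (x == k)%:R * z ^+ k + (count_mem (nat_of_ord k) d)%:R * z ^+ k)); last first.
  by move=> k _ /=; rewrite natrD mulrDl.
rewrite big_split /=; congr (_ + _).
rewrite (bigD1 (Ordinal hx)) //= eqxx mul1r big1 ?addr0 // => k hk.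
rewrite (_ : (x == k) = false) ?mul0r //; apply/negbTE; move: hk.
by apply: contra => /eqP e; apply/eqP/val_inj; rewrite /= e.
Qed.

Lemma count_tot m (d : seq nat) : all (fun x => x < m)%N d ->
  (\sum_(k < m) count_mem (nat_of_ord k) d)%N = size d.
Proof.
elim: d => [|x d IH] /=; first by rewrite big1.
case/andP => hx hd.
rewrite (eq_bigr (fun k : 'I_m => (x == k) + count_mem (nat_of_ord k) d)%N) // big_split /= IH //.
rewrite (bigD1 (Ordinal hx)) //= eqxx big1 ?addn0 // => k hk.
apply/eqP; rewrite eqb0; move: hk.
by apply: contra => /eqP e; apply/eqP/val_inj; rewrite /= e.
Qed.

Lemma termD (z : C) m a b : `|z| = 1 -> z ^+ m = 1 -> (b < m)%N ->
  z ^+ a * Num.conj (z ^+ b) = z ^+ ((a + (m - b)) %% m).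
Proof.
move=> hz hm hb.
have hzb : `|z ^+ b| = 1 by rewrite normrX hz expr1n.
have nz : z ^+ b != 0 by apply/eqP => h; move: hzb; rewrite h normr0 => /eqP; rewrite eq_sym oner_eq0.
have -> : Num.conj (z ^+ b) = z ^+ (m - b).
  apply: (mulfI nz); rewrite normC1_conj // -exprD subnKC ?hm //; exact: ltnW.
by rewrite -exprD expr_mod.
Qed.

Lemma zip_map_id (f g : nat -> nat) (s : seq nat) :
  zip (map f s) (map g s) = map (fun j => (f j, g j)) s.
Proof. by elim: s => //= x s ->. Qed.

Lemma finish (z : C) (m : nat) (T : seq (seq nat)) (H : 'M[C]_6) (F : 'I_6 -> 'I_6 -> nat) :
  `|z| = 1 -> z ^+ m = 1 -> (0 < m)%N -> check m T ->
  (forall d : seq nat, size d = 6%N -> all (fun x => x < m)%N d -> \sum_(x <- d) z ^+ x = 0 -> condm m d) ->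
  (forall i j, F i j < m)%N -> (forall i j, H i j = z ^+ F i j) ->
  (forall r s, r != s -> \sum_(j < 6) H r j * Num.conj (H s j) = 0) ->
  complex_equiv H (\matrix_(i, j) z ^+ nth2 T i j).
Proof.
move=> hz hm m0 hchk hvan hF hH horth.
have hzn n : `|z ^+ n| = 1 by rewrite normrX hz expr1n.
pose Fn (i j : nat) := F (inord i) (inord j).
have FnE (i j : 'I_6) : Fn i j = F i j by rewrite /Fn !inord_val.
have hFn i j : (Fn i j < m)%N by apply: hF.
pose Dn (i j : nat) := ((Fn i j + (m - Fn i 0)%N + (m - Fn 0 j)%N + Fn 0 0) %% m)%N.
have Dlt i j : (Dn i j < m)%N by rewrite ltn_mod.
have D0j j : Dn 0 j = 0%N.
  rewrite /Dn (_ : (_ + _ + _ + _ = m * 2)%N) ?modnMr //.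
  by move: (hFn 0%N j) (hFn 0%N 0%N); move: (Fn 0%N j) (Fn 0%N 0%N) => a b; lia.
have Di0 i : Dn i 0 = 0%N.
  rewrite /Dn (_ : (_ + _ + _ + _ = m * 2)%N) ?modnMr //.
  by move: (hFn i 0%N) (hFn 0%N 0%N); move: (Fn i 0%N) (Fn 0%N 0%N) => a b; lia.
have Dterm (r j : 'I_6) : z ^+ Dn r j =
    H r j * z ^+ (m - Fn r 0)%N * (z ^+ (m - Fn 0 j)%N * z ^+ Fn 0 0).
  by rewrite /Dn expr_mod // !exprD hH -FnE !mulrA.
have Dorth (r s : 'I_6) : r != s -> \sum_(j < 6) z ^+ Dn r j * Num.conj (z ^+ Dn s j) = 0.
  move=> hrs.
  rewrite (eq_bigr (fun j => (z ^+ (m - Fn r 0)%N * Num.conj (z ^+ (m - Fn s 0)%N)) *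
                       (H r j * Num.conj (H s j)))); last first.
    move=> j _; rewrite !Dterm !rmorphM /=.
    have hb := normC1_conj (hzn (m - Fn 0 j)%N); have hb' := normC1_conj (hzn (Fn 0 j)).
    set A := z ^+ (m - Fn 0 j)%N in hb *; set B := z ^+ Fn 0 j in hb' *.
    transitivity (z ^+ (m - Fn r 0)%N * Num.conj (z ^+ (m - Fn s 0)%N) * (H r j * Num.conj (H s j))
       * (A * Num.conj A) * (z ^+ Fn 0 0 * Num.conj (z ^+ Fn 0 0))); first by ring.
    by rewrite hb normC1_conj // !mulr1.
  by rewrite -mulr_sumr horth // mulr0.
pose rw (i : nat) := [seq Dn i j | j <- iota 0 6].
have hrow (r s : 'I_6) : r != s -> compat m (rw r) (rw s).
  move=> hrs; apply: hvan.
  - by rewrite /dlist size_map size_zip !size_map size_iota.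
  - by apply/allP => x /mapP [xy _ ->]; rewrite ltn_mod.
  - rewrite /dlist zip_map_id -map_comp big_map.
    rewrite (_ : \sum_(j <- iota 0 6) _ = \sum_(0 <= j < 6) z ^+ ((Dn r j + (m - Dn s j)%N) %% m)) //.
    rewrite big_mkord; rewrite -[RHS](Dorth r s hrs); apply: eq_bigr => j _.
    by rewrite (termD (Dn r j) hz hm (Dlt s j)).
have hrown (r s : nat) (hr : (r < 6)%N) (hs : (s < 6)%N) : r != s -> compat m (rw r) (rw s).
  by move=> h; apply: (hrow (Ordinal hr) (Ordinal hs)).
have rw0 : rw 0%N = zeros by rewrite /rw /= !D0j.
have hin (r : nat) (hr : (r < 6)%N) : r != 0%N -> rw r \in Rlist m.
  move=> h0; rewrite mem_filter; apply/andP; split; first (apply/andP; split).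
  - by rewrite /rw /= Di0.
  - by rewrite -rw0; apply: hrown; rewrite // eq_sym.
  apply: mem_allLists; first by rewrite size_map size_iota.
  by apply/allP => x /mapP [j _ ->].
have [sg [tau hrel]] := check_sound hchk (hin 1%N isT isT) (hin 2%N isT isT) (hin 3%N isT isT)
  (hin 4%N isT isT) (hin 5%N isT isT)
  (hrown 1%N 2%N isT isT isT) (hrown 1%N 3%N isT isT isT) (hrown 1%N 4%N isT isT isT)
  (hrown 1%N 5%N isT isT isT) (hrown 2%N 3%N isT isT isT) (hrown 2%N 4%N isT isT isT)
  (hrown 2%N 5%N isT isT isT) (hrown 3%N 4%N isT isT isT) (hrown 3%N 5%N isT isT isT)
  (hrown 4%N 5%N isT isT isT).
case: (relbP hrel) => psg ptau hrel'.
have L_eq : [:: zeros; rw 1%N; rw 2%N; rw 3%N; rw 4%N; rw 5%N] = [seq rw i | i <- iota 0 6].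
  by rewrite /= rw0.
have nthL i j : (i < 6)%N -> (j < 6)%N -> nth2 [:: zeros; rw 1%N; rw 2%N; rw 3%N; rw 4%N; rw 5%N] i j = Dn i j.
  move=> hi hj; rewrite L_eq /nth2 (nth_map 0%N) ?size_iota // nth_iota //.
  by rewrite (nth_map 0%N) ?size_iota // nth_iota.
case/and3P: psg => /eqP szs us /allP alls.
case/and3P: ptau => /eqP szt ut /allP allt.
have sgv (i : 'I_6) : (nth 0 sg i < 6)%N by apply: alls; apply: mem_nth; rewrite szs.
have tav (i : 'I_6) : (nth 0 tau i < 6)%N by apply: allt; apply: mem_nth; rewrite szt.
pose sgf (i : 'I_6) : 'I_6 := inord (nth 0 sg i).
pose tauf (i : 'I_6) : 'I_6 := inord (nth 0 tau i).
have sgf_inj : injective sgf.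
  move=> i j /(congr1 val); rewrite /sgf /= !inordK // => /eqP.
  by rewrite nth_uniq ?szs // => /eqP /val_inj.
have tauf_inj : injective tauf.
  move=> i j /(congr1 val); rewrite /tauf /= !inordK // => /eqP.
  by rewrite nth_uniq ?szt // => /eqP /val_inj.
have -> : H = \matrix_(i, j) z ^+ F i j by apply/matrixP => i j; rewrite mxE hH.
apply: (transfer (u := fun i => (Uf m T sg tau i + Fn i 0)%N)
                 (v := fun j => (Vf m T sg tau j + (Fn 0 j + (m - Fn 0 0)))%N) hz hm sgf_inj tauf_inj).
move=> i j; rewrite /sgf /tauf !inordK //.
have hD := hrel' i j (ltn_ord i) (ltn_ord j); rewrite nthL // in hD.
rewrite -FnE.
set X := (Fn i j + (m - Fn i 0) + (m - Fn 0 j) + Fn 0 0)%N.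
set c := (Fn i 0 + (Fn 0 j + (m - Fn 0 0)))%N.
have hDX : Dn i j = (X %% m)%N by [].
have e1 : (3 * m + Fn i j = X + c)%N.
  rewrite /X /c; move: (hFn i j) (hFn i 0%N) (hFn 0%N j) (hFn 0%N 0%N).
  move: (Fn i j) (Fn i 0%N) (Fn 0%N j) (Fn 0%N 0%N) => a b d e; lia.
rewrite -(modnMDl 3 (Fn i j) m) e1 -modnDml -hDX hD modnDml.
congr (_ %% m)%N; rewrite /c; move: (Fn i 0%N) (Fn 0%N j) (Fn 0%N 0%N) (nth2 T _ _) (Uf _ _ _ _ _) (Vf _ _ _ _ _) => a b d e f g; lia.
Qed.
End Fin.
Section Fin2.
Variable R : realType.
Local Notation C := R[i].

Lemma b02 : bump 0 2 = 3%N. Proof. by []. Qed.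

Lemma omega_norm : `|omega R| = 1.
Proof.
rewrite normc_def /omega /=.
have h : (- 2^-1 : R) ^+ 2 + (Num.sqrt 3 / 2) ^+ 2 = 1.
  rewrite (_ : (Num.sqrt 3 / 2) ^+ 2 = Num.sqrt 3 ^+ 2 / 4); last by field.
  by rewrite sqrt3E; field.
by rewrite h sqrtr1.
Qed.

Lemma omega3 : omega R ^+ 3 = 1.
Proof.
rewrite exprS omega2 /omega /=.
have h := @sqrt3E R; rewrite expr2 in h.
rewrite [RHS](_ : 1 = 1 +i* 0) //; congr (_ +i* _).
- rewrite (_ : _ - _ = 4^-1 + (Num.sqrt 3 * Num.sqrt 3) / 4); last by field.
  by rewrite h; field.
- by field.
Qed.

Lemma i_norm : `|'i : C| = 1.
Proof. by rewrite normc_def /= expr0n add0r expr1n sqrtr1. Qed.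

Lemma i4 : ('i : C) ^+ 4 = 1.
Proof. by rewrite (exprM _ 2 2) sqr_i sqrrN expr1n. Qed.

Lemma hvan3 : forall d : seq nat, size d = 6%N -> all (fun x => x < 3)%N d ->
  \sum_(x <- d) omega R ^+ x = 0 -> condm 3 d.
Proof.
move=> d sz hd; rewrite (sum_count_mem _ hd) => h.
rewrite !big_ord_recl big_ord0 /= b00 b01 expr0 expr1 omega2 addr0 in h.
have hre := congr1 (@complex.Re R) h; have him := congr1 (@complex.Im R) h.
rewrite !ReD !ReMn /= in hre; rewrite !ImD !ImMn /= in him.
have hs := @sqrt3_gt0 R.
have e12 : count_mem 1 d = count_mem 2 d.
  apply: natr_eqE; have : ((count_mem 1 d)%:R - (count_mem 2 d)%:R) * (Num.sqrt 3 / 2) = 0 :> R.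
    by rewrite -[RHS]him; ring.
  move/eqP; rewrite mulf_eq0 => /orP[/eqP h1|/eqP h1]; first by clear -h1; lra.
  by exfalso; clear -h1 hs; lra.
have e01 : count_mem 0 d = count_mem 1 d.
  apply: natr_eqE; rewrite e12 in hre *; clear -hre; lra.
have ht := count_tot hd.
rewrite !big_ord_recl big_ord0 /= b00 b01 in ht.
rewrite /condm /= in ht *; rewrite sz in ht; move: e01 e12 ht.
set c0 := count_mem 0 d; set c1 := count_mem 1 d; set c2 := count_mem 2 d => e01 e12 ht.
apply/and3P; split; apply/eqP; lia.
Qed.

Lemma hvan4 : forall d : seq nat, size d = 6%N -> all (fun x => x < 4)%N d ->
  \sum_(x <- d) ('i : C) ^+ x = 0 -> condm 4 d.
Proof.
move=> d sz hd; rewrite (sum_count_mem _ hd) => h.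
rewrite !big_ord_recl big_ord0 /= b00 b01 b02 expr0 expr1 sqr_i i3 addr0 in h.
have hre := congr1 (@complex.Re R) h; have him := congr1 (@complex.Im R) h.
rewrite !ReD !ReMn /= in hre; rewrite !ImD !ImMn /= in him.
rewrite /condm /=; apply/andP; split; apply/eqP; apply: natr_eqE; clear -hre him; lra.
Qed.

Lemma S6_0E : S6_0 R = \matrix_(i, j) omega R ^+ nth2 S6_exps i j.
Proof.
apply/matrixP => i j; rewrite !mxE.
by case: i => [[|[|[|[|[|[|i]]]]]] hi] //; case: j => [[|[|[|[|[|[|j]]]]]] hj].
Qed.

Lemma H6_1E : H6_1 R = \matrix_(i, j) ('i : C) ^+ nth2 E1e i j.
Proof.
apply/matrixP => i j; rewrite !mxE.
case: i => [[|[|[|[|[|[|i]]]]]] hi] //; case: j => [[|[|[|[|[|[|j]]]]]] hj] //=;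
  by rewrite ?sqr_i // -expr2 sqr_i.
Qed.
End Fin2.

Unset Implicit Arguments.

Theorem mainTheorem9 (R : realType) (a : R[i]) (H : 'M[R[i]]_6) :
  `|a| = 1 ->
  is_CHM H ->
  (forall i j, H i j \in [:: 1; a; a ^+ 2]) ->
  complex_equiv H (S6_0 R) \/ complex_equiv H (H6_1 R).
Proof.
move=> ha [hn hmul] hin.
pose E (i j : 'I_6) : nat := if H i j == 1 then 0%N else if H i j == a then 1%N else 2%N.
have hE i j : (E i j < 3)%N by rewrite /E; case: ifP => //; case: ifP.
have hHE i j : H i j = a ^+ E i j.
  rewrite /E; move: (hin i j); rewrite !inE.
  case: (H i j =P 1) => [->|_] /=; first by rewrite expr0.
  case: (H i j =P a) => [->|_] /=; first by rewrite expr1.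
  by move/eqP.
have horth r s : r != s -> \sum_(j < 6) H r j * Num.conj (H s j) = 0.
  move=> hrs; have := congr1 (fun M : 'M[R[i]]_6 => M r s) hmul.
  rewrite !mxE (negbTE hrs) mulr0n => h; rewrite -[RHS]h; apply: eq_bigr => j _; by rewrite adjmxE.
have horthE r s : r != s -> \sum_(j < 6) a ^+ E r j * Num.conj (a ^+ E s j) = 0.
  by move=> hrs; rewrite -[RHS](horth r s hrs); apply: eq_bigr => j _; rewrite !hHE.
case: (a_cases ha hE horthE) => ha'.
- right; rewrite H6_1E.
  apply: (finish (m := 4%N) (F := E)).
  + exact: i_norm.
  + exact: i4.
  + by [].
  + exact: chk4.
  + exact: hvan4.
  + by move=> i j; apply: (leq_trans (hE i j)).
  + by move=> i j; rewrite hHE ha'.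
  + exact: horth.
- right; rewrite H6_1E.
  apply: (finish (m := 4%N) (F := fun i j => (3 * E i j) %% 4)%N).
  + exact: i_norm.
  + exact: i4.
  + by [].
  + exact: chk4.
  + exact: hvan4.
  + by move=> i j; rewrite ltn_mod.
  + by move=> i j; rewrite hHE ha' -exprM expr_mod // i4.
  + exact: horth.
- left; rewrite S6_0E.
  apply: (finish (m := 3%N) (F := E)).
  + exact: omega_norm.
  + exact: omega3.
  + by [].
  + exact: chk3.
  + exact: hvan3.
  + exact: hE.
  + by move=> i j; rewrite hHE ha'.
  + exact: horth.
- left; rewrite S6_0E.
  apply: (finish (m := 3%N) (F := fun i j => (2 * E i j) %% 3)%N).
  + exact: omega_norm.
  + exact: omega3.
  + by [].
  + exact: chk3.
  + exact: hvan3.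
  + by move=> i j; rewrite ltn_mod.
  + by move=> i j; rewrite hHE ha' -exprM expr_mod // omega3.
  + exact: horth.
Qed.
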